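(* Let $C=\{c_1,\dots,c_m\}\subset\mathbb{R}$ with $c_1\le c_2\le\dots\le c_m$, let $\mathcal{I}$ be a finite set of closed intervals in $\mathbb{R}$, and let $f\ge0$ be an integer such that every interval $I\in\mathcal{I}$ satisfies $|I\cap C|>f$. Then $T\subseteq C$ is an $f$-tolerant hitting set of $\mathcal{I}$ if and only if $|T\cap C_{i,j}|\ge\delta_{i,j}(f)$ for all $1\le i\le j\le m$.
   Context: A set $X\subseteq C$ hits $\mathcal{I}$ (is a hitting set) if every interval of $\mathcal{I}$ contains a point of $X$. $T\subseteq C$ is an $f$-tolerant hitting set of $\mathcal{I}$ if for every $J\subseteq C$ with $|J|\le f$ there exists $R\subseteq C\setminus J$ with $|(T\setminus J)\cup R|\le|T|$ such that $(T\setminus J)\cup R$ hits $\mathcal{I}$. For a set of points $X$, a set of intervals is $X$-disjoint if every point of $X$ lies in at most one of its intervals. For $1\le i\le j\le m$: $C_{i,j}=\{c_i,\dots,c_j\}$; $\mathcal{I}_{i,j}=\{I\in\mathcal{I}: I\cap C\subseteq C_{i,j}\}$; for $J\subseteq C_{i,j}$, $\delta_{i,j}(J)$ is the maximum size of a $(C_{i,j}\setminus J)$-disjoint subset of $\mathcal{I}_{i,j}$; and $\delta_{i,j}(f)=\max_{J\subseteq C_{i,j},|J|\le f}\delta_{i,j}(J)$. (In the application, $\mathcal{I}$ consists of the intervals of length $2r$ centered at the voters.) *)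

(* Defs.v *)
From HB Require Import structures.
From mathcomp Require Import all_boot all_order all_algebra.
From mathcomp Require Import finmap.
Set Implicit Arguments. Unset Strict Implicit. Unset Printing Implicit Defensive.
Import Order.TTheory GRing.Theory Num.Theory.
Local Open Scope ring_scope.
Local Open Scope fset_scope.

Section Defs.
Variables (R : realFieldType) (m : nat) (c : 'I_m -> R).

(* The candidate set C = {c_0, ..., c_(m-1)} is represented by its indices 'I_m;
   subsets of C are {set 'I_m}.  A closed interval [a,b] is a pair (a,b). *)
Definition in_itv (I : R * R) (x : R) : bool := (I.1 <= x) && (x <= I.2).

Definition pts (I : R * R) : {set 'I_m} := [set k | in_itv I (c k)].

Definition hits (Ic : {fset R * R}) (X : {set 'I_m}) : Prop :=
  forall I, I \in Ic -> exists2 k, k \in X & in_itv I (c k).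

Definition tolerant (Ic : {fset R * R}) (f : nat) (T : {set 'I_m}) : Prop :=
  forall J : {set 'I_m}, (#|J| <= f)%N ->
    exists Rs : {set 'I_m}, [/\ Rs \subset ~: J,
      (#|(T :\: J) :|: Rs| <= #|T|)%N & hits Ic ((T :\: J) :|: Rs)].

Definition Cij (i j : 'I_m) : {set 'I_m} := [set k : 'I_m | (i <= k <= j)%N].

Definition Iij (Ic : {fset R * R}) (i j : 'I_m) : {fset R * R} :=
  [fset I in Ic | pts I \subset Cij i j].

Definition disjointb (X : {set 'I_m}) (S : {fset R * R}) : bool :=
  [forall k in X, #|[set I : S | in_itv (val I) (c k)]| <= 1]%N.

Definition deltaJ (Ic : {fset R * R}) (i j : 'I_m) (J : {set 'I_m}) : nat :=
  \max_(S <- fpowerset (Iij Ic i j) | disjointb (Cij i j :\: J) S) #|` S|.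

Definition deltaf (Ic : {fset R * R}) (i j : 'I_m) (f : nat) : nat :=
  \max_(J : {set 'I_m} | (J \subset Cij i j) && (#|J| <= f)%N) deltaJ Ic i j J.

End Defs.

(* Main.v *)
Require Import Defs.
From HB Require Import structures.
From mathcomp Require Import all_boot all_order all_algebra.
From mathcomp Require Import finmap.
From Stdlib Require Import Classical.
Import Order.TTheory GRing.Theory Num.Theory.
Local Open Scope fset_scope.
Set Implicit Arguments. Unset Strict Implicit. Unset Printing Implicit Defensive.
Section Greedy.
Variables (m : nat) (K : choiceType) (A : K -> {set 'I_m}) (P : {set 'I_m}) (F : {fset K}).
Hypothesis conv : forall I, I \in F -> forall a b k : 'I_m,
  a \in A I -> b \in A I -> (a <= k <= b)%N -> k \in A I.
Hypothesis ne : forall I, I \in F -> exists k, (k \in P) && (k \in A I).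

Definition disjS (S : {fset K}) := forall I1 I2, I1 \in S -> I2 \in S ->
  forall k, k \in P -> k \in A I1 -> k \in A I2 -> I1 = I2.

Definition Inv (q : nat) := exists X : {set 'I_m}, exists S : {fset K},
  [/\ X \subset P, (forall x, x \in X -> x < q)%N & S `<=` F] /\
  [/\ (forall I, I \in F -> (forall k, k \in P -> k \in A I -> k < q)%N ->
      exists2 k, k \in X & k \in A I),
   (#|X| <= #|` S|)%N, disjS S &
   (forall J, J \in S -> forall k, k \in P -> k \in A J -> exists2 x, x \in X & (k <= x)%N)].

Lemma Inv0 : Inv 0.
Proof.
exists set0, fset0; split; split.
- by apply/subsetP=> x; rewrite inE.
- by move=> x; rewrite inE.
- exact: fsub0set.
- move=> I /ne [k /andP[kP kA]] H; by have := H k kP kA.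
- by rewrite cards0.
- by move=> I1 I2; rewrite inE.
- by move=> J; rewrite inE.
Qed.

Lemma InvS q : Inv q -> Inv q.+1.
Proof.
move=> [X [S [[XP Xq SF] [Xhit cXS dS lS]]]].
case: (classic (exists I0, [/\ I0 \in F,
   (forall k, k \in P -> k \in A I0 -> k < q.+1)%N &
   ~ exists2 k, k \in X & k \in A I0])); last first.
  move=> Hn; exists X, S; split; split => //.
  - by move=> x /Xq /ltnW.
  move=> I IF HI; apply: NNPP => Hnh; apply: Hn; exists I; split => //.
move=> [I0 [I0F I0q I0nh]].
have [k0 /andP[k0P k0A] k0q] : exists2 k, (k \in P) && (k \in A I0) & val k = q.
  case: (classic (exists2 k, (k \in P) && (k \in A I0) & (q <= k)%N)).
    move=> [k /andP[kP kA] qk]; exists k; first by rewrite kP kA.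
    by apply/eqP; rewrite eqn_leq qk -ltnS I0q.
  move=> Hn; exfalso; apply: I0nh; apply: Xhit => // k kP kA.
  rewrite ltnNge; apply/negP => qk; apply: Hn; exists k => //; by rewrite kP kA.
have I0S : I0 \notin S.
  apply/negP => /lS /(_ k0 k0P k0A) [x /Xq]; rewrite k0q => xq qx.
  by have := leq_trans xq qx; rewrite ltnn.
exists (k0 |: X), (I0 |` S); split; split.
- by apply/subsetP=> x; rewrite !inE => /orP[/eqP->//|/(subsetP XP)].
- by move=> x; rewrite !inE => /orP[/eqP->|/Xq/ltnW//]; rewrite k0q.
- by apply/fsubsetP=> x; rewrite !inE => /orP[/eqP->//|/(fsubsetP SF)].
- move=> I IF HI.
  case: (classic (exists2 k, (k \in P) && (k \in A I) & (q <= k)%N)).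
    move=> [k /andP[kP kA] qk]; exists k => //.
    have -> : k = k0.
      by apply: val_inj; apply/eqP; rewrite k0q eqn_leq qk -ltnS HI.
    by rewrite setU11.
  move=> Hn; have [k kX kA] : exists2 k, k \in X & k \in A I.
    apply: Xhit => // k kP kA.
    rewrite ltnNge; apply/negP => qk; apply: Hn; exists k => //; by rewrite kP kA.
  by exists k => //; rewrite setU1r.
- by rewrite cardsU1 cardfsU1 I0S; case: (k0 \in X) => /=; rewrite ?add1n ?add0n // ltnW.
- have cross : forall J, J \in S -> forall k, k \in P -> k \in A I0 -> k \in A J -> False.
    move=> J JS k kP kI kJ.
    have [x xX kx] := lS J JS k kP kJ.
    apply: I0nh; exists x => //.
    apply: (conv I0F kI k0A); rewrite kx /=.
    by rewrite k0q ltnW // Xq.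
  move=> I1 I2; rewrite !inE => /orP[/eqP->|H1] /orP[/eqP->|H2] k kP k1 k2 //.
  + by case: (cross _ H2 _ kP k1 k2).
  + by case: (cross _ H1 _ kP k2 k1).
  + exact: dS H1 H2 k kP k1 k2.
- move=> J; rewrite !inE => /orP[/eqP->|JS] k kP kA.
    by exists k0; rewrite ?setU11 // -ltnS k0q I0q.
  by have [x xX kx] := lS J JS k kP kA; exists x => //; rewrite setU1r.
Qed.

Lemma greedy : exists X : {set 'I_m}, exists S : {fset K},
  [/\ X \subset P, S `<=` F,
   (forall I, I \in F -> exists2 k, k \in X & k \in A I),
   (#|X| <= #|` S|)%N & disjS S].
Proof.
have : Inv m.
  suff H : forall q, Inv q by apply: H.
  by elim=> [|q IH]; [exact: Inv0 | exact: InvS].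
move=> [X [S [[XP _ SF] [Xhit cXS dS _]]]]; exists X, S; split => //.
by move=> I IF; apply: Xhit => // k _ _; apply: ltn_ord.
Qed.
End Greedy.
Local Open Scope ring_scope.
Local Open Scope fset_scope.

Section Nec.
Variables (R : realFieldType) (m : nat) (c : 'I_m -> R)
    (Ic : {fset R * R}) (f : nat) (T : {set 'I_m}).

Lemma cardUD (A B : {set 'I_m}) : #|A :|: B| = (#|A| + #|B :\: A|)%N.
Proof.
rewrite -(cardsID A (A :|: B)) setUK setDUl setDv set0U //.
Qed.

Lemma nec : tolerant c Ic f T ->
  forall i j : 'I_m, (i <= j)%N -> (deltaf c Ic i j f <= #|T :&: Cij i j|)%N.
Proof.
move=> tol i j _; apply/bigmax_leqP => J /andP[JC Jf].
apply/bigmax_leqP_seq => S; rewrite fpowersetE => SI dS.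
have [Rs [RsJ cardX hitX]] := tol J Jf.
set X := (T :\: J) :|: Rs.
have h1 : (#|` S| <= #|X :&: Cij i j|)%N.
  have gP : forall I : S, exists k, [&& k \in X, k \in Cij i j, k \notin J &
                                      Defs.in_itv (val I) (c k)].
    move=> [I IS] /=.
    have := fsubsetP SI I IS; rewrite !inE => /andP[IIc /subsetP Ipts].
    have [k kX kI] := hitX I IIc; exists k; rewrite kX kI /=.
    rewrite Ipts ?inE // andbT.
    move: kX; rewrite /X !inE => /orP[/andP[->//]|/(subsetP RsJ)]; rewrite inE.
    done.
  pose g (I : S) := xchoose (gP I).
  have ginj : injective g.
    move=> I1 I2 e.
    have /and4P[_ k1C k1J k1I] := xchooseP (gP I1).
    have /and4P[_ k2C k2J k2I] := xchooseP (gP I2).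
    have kin : g I1 \in Cij i j :\: J by rewrite inE k1J k1C.
    move: dS; rewrite /disjointb => /forallP /(_ (g I1)) /implyP /(_ kin).
    move=> /card_le1_eqP; apply; rewrite inE //.
    by rewrite e.
  rewrite cardfE -cardsT -(card_imset _ ginj).
  apply: subset_leq_card; apply/subsetP => k /imsetP [I _ ->].
  by have /and4P[gX gC _ _] := xchooseP (gP I); rewrite inE gX gC.
apply: (leq_trans h1).
have hR : (#|Rs :\: (T :\: J)| <= #|T :&: J|)%N.
  have := cardX; rewrite /X cardUD => h.
  by rewrite -(leq_add2l #|T :\: J|) (leq_trans h) // -{1}(cardsID J T) addnC.
have e1 : T :&: Cij i j :&: J = T :&: J.
  apply/setP => k; rewrite !inE; case kJ: (k \in J); rewrite ?andbF ?andbT //.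
  by move: (subsetP JC k kJ); rewrite inE => ->; rewrite ?andbT.
rewrite -(cardsID J (T :&: Cij i j)) e1.
apply: (leq_trans (n := #|(T :&: Cij i j :\: J) :|: (Rs :\: (T :\: J))|)).
  apply: subset_leq_card; apply/subsetP => k; rewrite !inE.
  by case: (k \in J); case: (k \in T); case: (k \in Rs); case: (i <= k <= j)%N.
by rewrite cardUD addnC leq_add2r (leq_trans _ hR) // subset_leq_card // subsetDl.
Qed.
End Nec.

Section Suff.
Variables (R : realFieldType) (m : nat) (c : 'I_m -> R)
    (Ic : {fset R * R}) (f : nat) (T J : {set 'I_m}).
Hypothesis mono : forall i j : 'I_m, (i < j)%N -> c i < c j.
Hypothesis big : forall I, I \in Ic -> (f < #|pts c I|)%N.
Hypothesis hdelta : forall i j : 'I_m, (i <= j)%N ->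
   (deltaf c Ic i j f <= #|T :&: Cij i j|)%N.
Hypothesis Jf : (#|J| <= f)%N.

Lemma c_le (i j : 'I_m) : (i <= j)%N -> c i <= c j.
Proof.
by rewrite leq_eqVlt => /orP[/eqP/val_inj->//|/mono/ltW].
Qed.

Lemma pts_conv I (a b k : 'I_m) : a \in pts c I -> b \in pts c I ->
  (a <= k <= b)%N -> k \in pts c I.
Proof.
rewrite !inE /Defs.in_itv => /andP[a1 _] /andP[_ b2] /andP[ak kb].
by rewrite (le_trans a1 (c_le ak)) (le_trans (c_le kb) b2).
Qed.

Lemma pts_ne I : I \in Ic -> exists k, (k \in ~: J) && (k \in pts c I).
Proof.
move=> IIc.
have : ~~ (pts c I \subset J).
  apply/negP => /subset_leq_card h.
  by have := leq_ltn_trans (leq_trans h Jf) (big IIc); rewrite ltnn.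
by move=> /subsetPn [k kp kJ]; exists k; rewrite inE kJ kp.
Qed.

Definition nh I := (T :\: J) :&: pts c I == set0.

Definition Claim (q : nat) := exists X : {set 'I_m},
  [/\ X \subset ~: J,
   (forall I, I \in Ic -> nh I -> (forall k : 'I_m, k \in pts c I -> q <= k)%N ->
      exists2 k, k \in X & k \in pts c I) &
   (#|X| <= #|[set k in T :&: J | (q <= k)%N]|)%N].

Lemma gap q t : (q <= t)%N -> (t <= m)%N ->
  (forall k : 'I_m, (q <= k < t)%N -> k \notin T :\: J) ->
  exists X : {set 'I_m},
  [/\ X \subset ~: J,
   (forall I, I \in Ic -> nh I -> (forall k : 'I_m, k \in pts c I -> q <= k < t)%N ->
      exists2 k, k \in X & k \in pts c I) &
   (#|X| <= #|[set k in T :&: J | (q <= k < t)%N]|)%N].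
Proof.
move=> qt tm ht.
pose G := [fset I in Ic | nh I && [forall k, (k \in pts c I) ==> (q <= k < t)%N]].
have GIc : forall I, I \in G -> I \in Ic /\ nh I /\
    (forall k : 'I_m, k \in pts c I -> q <= k < t)%N.
  move=> I; rewrite !inE => /andP[IIc /andP[nhI /forallP H]].
  by do 2!split => //; move=> k kp; have := H k; rewrite kp.
have [X [S [XP SG Xhit cXS dS]]] := @greedy m _ (pts c) (~: J) G
  (fun I _ => @pts_conv I) (fun I IG => pts_ne (proj1 (GIc I IG))).
exists X; split => //.
  move=> I IIc nhI H; apply: Xhit; rewrite !inE IIc nhI /=.
  by apply/forallP => k; apply/implyP => /H.
apply: (leq_trans cXS).
case: (fset_0Vmem S) => [->|[I0 I0S]]; first by rewrite cardfs0.
have [I0Ic [_ I0q]] := GIc I0 (fsubsetP SG I0 I0S).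
have [k0 /andP[_ k0p]] := pts_ne I0Ic.
have /andP[qk0 k0t] := I0q k0 k0p.
have t0 : (0 < t)%N by apply: leq_ltn_trans k0t.
have qm : (q < m)%N by apply: leq_trans tm; apply: leq_ltn_trans k0t.
have tm' : (t.-1 < m)%N by rewrite (leq_trans _ tm) // prednK.
pose i := Ordinal qm; pose j := Ordinal tm'.
have eC : Cij i j = [set k : 'I_m | (q <= k < t)%N].
  by apply/setP => k; rewrite !inE /= -{2}(prednK t0) ltnS.
apply: (@leq_trans (deltaJ c Ic i j (J :&: Cij i j))).
  apply: leq_bigmax_seq.
    rewrite fpowersetE; apply/fsubsetP => I IS.
    have [IIc [_ Iq]] := GIc I (fsubsetP SG I IS).
    rewrite !inE IIc /= eC; apply/subsetP => k kp; rewrite inE; exact: Iq.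
  apply/forallP => k; apply/implyP; rewrite !inE => /andP[kJ kC].
  apply/card_le1_eqP => I1 I2; rewrite !inE => h1 h2.
  apply: val_inj; move: (dS (fsval I2) (fsval I1) (fsvalP I2) (fsvalP I1) k) => H; apply: H.
  - by rewrite inE; move: kJ; rewrite kC !andbT.
  - by rewrite inE.
  - by rewrite inE.
apply: (@leq_trans (deltaf c Ic i j f)).
  rewrite /deltaf; apply: leq_bigmax_cond.
  by rewrite subsetIr (leq_trans _ Jf) // subset_leq_card // subsetIl.
apply: (leq_trans (hdelta (i := i) (j := j) _)).
  by rewrite /= -ltnS prednK // (leq_ltn_trans qk0 k0t).
apply: subset_leq_card; apply/subsetP => k; rewrite eC !inE => /andP[kT kq].
by have := ht k kq; rewrite !inE kT kq andbT negbK => ->.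
Qed.

Lemma step q : (q <= m)%N ->
  (forall q', (q < q')%N -> (q' <= m)%N -> Claim q') -> Claim q.
Proof.
move=> qm IH.
pose pt n := (q <= n)%N && ((m <= n)%N ||
   [exists k : 'I_m, (k \in T :\: J) && (val k == n)]).
have ex : exists n, pt n by exists m; rewrite /pt qm leqnn.
case: (ex_minnP ex) => t /andP[qt tcase] tmin.
have tm : (t <= m)%N by apply: tmin; rewrite /pt qm leqnn.
have ht : forall k : 'I_m, (q <= k < t)%N -> k \notin T :\: J.
  move=> k /andP[qk kt]; apply/negP => kTJ.
  have : (t <= k)%N.
    apply: tmin; rewrite /pt qk /=; apply/orP; right.
    by apply/existsP; exists k; rewrite kTJ eqxx.
  by rewrite leqNgt kt.
have [X1 [X1J X1hit X1c]] := gap qt tm ht.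
case: (leqP m t) => [mt | tlt].
  exists X1; split => //.
    move=> I IIc nhI H; apply: X1hit => // k kp.
    by rewrite H //= (leq_trans (ltn_ord k) mt).
  apply: (leq_trans X1c); apply: subset_leq_card; apply/subsetP => k.
  by rewrite !inE => /andP[-> /andP[-> _]].
have [k0 /andP[k0TJ /eqP k0t]] : exists k0 : 'I_m, (k0 \in T :\: J) && (val k0 == t).
  by move: tcase; rewrite leqNgt tlt /= => /existsP.
have [X2 [X2J X2hit X2c]] := IH t.+1 (leq_ltn_trans qt (ltnSn t)) tlt.
exists (X1 :|: X2); split.
- by rewrite subUset X1J X2J.
- move=> I IIc nhI H.
  case: (boolP [forall k, (k \in pts c I) ==> (k < t)%N]) => [/forallP Ha|].
    have [k kX kp] : exists2 k, k \in X1 & k \in pts c I.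
      apply: X1hit => // k kp; rewrite H //=; have := Ha k; rewrite kp; exact.
    by exists k => //; rewrite inE kX.
  rewrite negb_forall => /existsP [k1]; rewrite negb_imply -leqNgt => /andP[k1p tk1].
  have [k kX kp] : exists2 k, k \in X2 & k \in pts c I.
    apply: X2hit => // k kp; rewrite ltnNge; apply/negP => kt.
    have : k0 \in pts c I by apply: (pts_conv kp k1p); rewrite k0t kt tk1.
    move=> k0p; move/eqP: nhI => /setP /(_ k0); rewrite inE k0TJ k0p inE.
    done.
  by exists k => //; rewrite inE kX orbT.
- apply: (leq_trans (n := (#|X1| + #|X2|)%N)).
    by rewrite cardsU leq_subr.
  apply: (leq_trans (leq_add X1c X2c)).
  set A1 := [set k in T :&: J | _]; set A2 := [set k in T :&: J | _].
  have -> : (#|A1| + #|A2| = #|A1 :|: A2|)%N.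
    rewrite cardsU (_ : A1 :&: A2 = set0) ?cards0 ?subn0 //.
    apply/setP => k; rewrite !inE.
    have hk : ~~ ((k < t)%N && (t < k)%N).
      by apply/negP => /andP[a b]; have := ltn_trans a b; rewrite ltnn.
    by move: hk; case: (k < t)%N; case: (t < k)%N => //= _; rewrite !andbF.
  apply: subset_leq_card; apply/subsetP => k; rewrite !inE.
  move=> /orP[/andP[-> /andP[-> _]]//|/andP[-> h]].
  by rewrite (leq_trans qt) // ltnW.
Qed.

Lemma claim_all n q : (m - q <= n)%N -> (q <= m)%N -> Claim q.
Proof.
elim: n q => [|n IHn] q hn qm; apply: step => // q' qq' q'm.
  by move: hn; rewrite leqn0 subn_eq0 => mq; have := leq_ltn_trans mq qq'; rewrite ltnNge q'm.
apply: IHn => //.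
by rewrite -ltnS (leq_trans _ hn) // ltn_sub2l // (leq_trans qq' q'm).
Qed.

Lemma suff_main : exists Rs : {set 'I_m}, [/\ Rs \subset ~: J,
      (#|(T :\: J) :|: Rs| <= #|T|)%N & hits c Ic ((T :\: J) :|: Rs)].
Proof.
have [X [XJ Xhit Xc]] := claim_all (n := m) (q := 0) (leq_subr _ _) (leq0n _).
exists X; split => //.
  rewrite cardsU -(cardsID J T) (leq_trans (leq_subr _ _)) // [(#|T :&: J| + _)%N]addnC leq_add2l.
  by rewrite (leq_trans Xc) // subset_leq_card //; apply/subsetP => k; rewrite !inE andbT.
move=> I IIc.
case: (boolP (nh I)) => nhI.
  have [k kX kp] := Xhit I IIc nhI (fun k _ => leq0n k).
  by exists k; rewrite ?inE ?kX ?orbT //; move: kp; rewrite inE.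
move: nhI; rewrite /nh => /set0Pn [k]; rewrite !inE => /andP[kTJ kp].
by exists k; rewrite ?inE ?kTJ //.
Qed.
End Suff.

Theorem lemma3 (R : realFieldType) (m : nat) (c : 'I_m -> R)
    (Ic : {fset R * R}) (f : nat) (T : {set 'I_m}) :
  (forall i j : 'I_m, (i < j)%N -> c i < c j) ->
  (forall I, I \in Ic -> (f < #|pts c I|)%N) ->
  tolerant c Ic f T <->
  (forall i j : 'I_m, (i <= j)%N -> (deltaf c Ic i j f <= #|T :&: Cij i j|)%N).
Proof.
move=> mono big; split; first exact: nec.
move=> hd J Jf; exact: (suff_main mono big hd Jf).
Qed.
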